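(* Let $1\le i,j\le N-1$ with $i\neq j$ and $i\ne j+1$. Then $T_j^{-1}\phi_iT_j=\phi_i$ in $\mathcal H_N(s)$.
   Context: $N\ge2$, $s$ an indeterminate. $\mathcal H_N(s)$ is the algebra over $\mathbb C(s)$ (or $\mathbb C(q,s)$) generated by $T_1,\dots,T_{N-1}$ with relations $(T_i+1)(T_i-s)=0$, $T_iT_{i+1}T_i=T_{i+1}T_iT_{i+1}$, $T_iT_j=T_jT_i$ for $|i-j|>1$; $T_i^{-1}=s^{-1}(T_i+1-s)$. For $1\le i<N$, $\phi_i:=s^{i-N}T_iT_{i+1}\cdots T_{N-1}T_{N-1}\cdots T_i$. *)

(* Defs.v *)
From HB Require Import structures.
From mathcomp Require Import all_boot all_order all_algebra.
Set Implicit Arguments. Unset Strict Implicit. Unset Printing Implicit Defensive.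
Import GRing.Theory.
Local Open Scope ring_scope.

(* Generators T_1, ..., T_{N-1} of the Iwahori-Hecke algebra H_N(s), realised
   in an arbitrary K-algebra A (K a field, s : K nonzero).  The values of T at
   indices outside 1..N-1 are irrelevant. *)
Definition hecke_rels (K : fieldType) (A : algType K) (N : nat) (s : K)
    (T : nat -> A) : Prop :=
  [/\ (forall i, (1 <= i < N)%N -> (T i + 1) * (T i - s%:A) = 0),
      (forall i, (1 <= i)%N -> (i.+1 < N)%N ->
          T i * T i.+1 * T i = T i.+1 * T i * T i.+1)
    & (forall i j, (1 <= i < N)%N -> (1 <= j < N)%N -> (i.+1 < j \/ j.+1 < i)%N ->
          T i * T j = T j * T i)].

Definition Tinv (K : fieldType) (A : algType K) (s : K) (T : nat -> A) (i : nat) : A :=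
  s^-1 *: (T i + 1 - s%:A).

Definition phi (K : fieldType) (A : algType K) (N : nat) (s : K) (T : nat -> A)
    (i : nat) : A :=
  (s ^- (N - i)) *:
    ((\prod_(k <- index_iota i N) T k) * (\prod_(k <- rev (index_iota i N)) T k)).

(* Main.v *)
Require Import Defs.
From HB Require Import structures.
From mathcomp Require Import all_boot all_order all_algebra.
From mathcomp Require Import zify.
Import GRing.Theory.
Local Open Scope ring_scope.

Section H.
Variables (K : fieldType) (A : algType K) (N : nat) (s : K) (T : nat -> A).
Hypothesis hr : hecke_rels N s T.

Let L a := \prod_(k <- index_iota a N) T k.
Let R a := \prod_(k <- rev (index_iota a N)) T k.

Lemma iotaS a : (a < N)%N -> index_iota a N = a :: index_iota a.+1 N.
Proof. by move=> h; rewrite /index_iota (_ : (N - a = (N - a.+1).+1)%N) //; lia. Qed.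

Lemma LS a : (a < N)%N -> L a = T a * L a.+1.
Proof. by move=> h; rewrite /L iotaS // big_cons. Qed.

Lemma RS a : (a < N)%N -> R a = R a.+1 * T a.
Proof. by move=> h; rewrite /R iotaS // rev_cons big_rcons. Qed.

Lemma comm_list (x : A) (r : seq nat) :
  (forall k, k \in r -> x * T k = T k * x) ->
  x * \prod_(k <- r) T k = \prod_(k <- r) T k * x.
Proof.
elim: r => [|a r IH] h; first by rewrite big_nil mulr1 mul1r.
rewrite big_cons mulrA h ?mem_head // -mulrA IH ?mulrA // => k kr.
by apply: h; rewrite in_cons kr orbT.
Qed.

Lemma Tcomm i j : (1 <= i < N)%N -> (1 <= j < N)%N -> (i.+1 < j \/ j.+1 < i)%N ->
  T i * T j = T j * T i.
Proof. by case: hr => _ _ h; apply: h. Qed.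

Lemma Tbraid i : (1 <= i)%N -> (i.+1 < N)%N -> T i * T i.+1 * T i = T i.+1 * T i * T i.+1.
Proof. by case: hr => _ h _; apply: h. Qed.

Lemma commL b c : (1 <= c)%N -> (c.+1 < b)%N -> T c * L b = L b * T c.
Proof.
move=> h1 h2; apply: comm_list => k; rewrite mem_index_iota => /andP[hb hN].
by apply: Tcomm; [lia|lia|left; lia].
Qed.

Lemma commR b c : (1 <= c)%N -> (c.+1 < b)%N -> T c * R b = R b * T c.
Proof.
move=> h1 h2; apply: comm_list => k; rewrite mem_rev mem_index_iota => /andP[hb hN].
by apply: Tcomm; [lia|lia|left; lia].
Qed.

Lemma lemA d : forall a j, (1 <= a)%N -> (a + d.+1)%N = j -> (j < N)%N ->
  T j * L a = L a * T j.-1.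
Proof.
elim: d => [|d IH] a j ha hj hN.
- have ej : j = a.+1 by lia.
  rewrite ej /=.
  have h1 := LS a ltac:(lia). have h2 := LS a.+1 ltac:(lia).
  rewrite h1 h2 !mulrA -(Tbraid a) //; try lia.
  rewrite -!mulrA (commL a.+2 a) //; lia.
- have h1 := LS a ltac:(lia).
  rewrite h1 mulrA -(Tcomm a j); [|lia|lia|left; lia].
  by rewrite -mulrA (IH a.+1 j) ?mulrA //; lia.
Qed.

Lemma lemB d : forall a j, (1 <= a)%N -> (a + d.+1)%N = j -> (j < N)%N ->
  T j.-1 * R a = R a * T j.
Proof.
elim: d => [|d IH] a j ha hj hN.
- have ej : j = a.+1 by lia.
  rewrite ej /=.
  have h1 := RS a ltac:(lia). have h2 := RS a.+1 ltac:(lia).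
  rewrite h1 h2 !mulrA (commR a.+2 a) //; try lia.
  rewrite -!mulrA; congr (_ * _); rewrite !mulrA; apply: Tbraid; lia.
- have h1 := RS a ltac:(lia).
  rewrite h1 mulrA (IH a.+1 j) //; try lia.
  by rewrite -!mulrA (Tcomm j a); [|lia|lia|right; lia].
Qed.

Lemma TinvT j : s != 0 -> (1 <= j < N)%N -> Tinv s T j * T j = 1.
Proof.
move=> hs hj; case: hr => q _ _; have := q j hj.
rewrite /Tinv -scalerAl => e.
have e1 : (T j + 1 - s%:A) * T j - s%:A = (T j + 1) * (T j - s%:A).
  rewrite !mulrDl ?mulrBl !mulrBr ?mul1r ?mulr1 ?mulNr ?mulr_algl ?mulr_algr.
  by rewrite -!addrA; congr (_ + _); rewrite addrCA.
have e2 : (T j + 1 - s%:A) * T j = s%:A.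
  by apply/eqP; rewrite -subr_eq0 e1 e.
by rewrite e2 scalerA mulVf // scale1r.
Qed.

End H.

Theorem lemma2p2 (K : fieldType) (A : algType K) (N : nat) (s : K) (T : nat -> A) :
  (2 <= N)%N -> s != 0 -> hecke_rels N s T ->
  forall i j : nat, (1 <= i <= N - 1)%N -> (1 <= j <= N - 1)%N ->
    i != j -> i != j.+1 ->
    Tinv s T j * phi N s T i * T j = phi N s T i.
Proof.
move=> hN hs hr i j hi hj nij nij1.
have cL := @commL K A N s T hr. have cR := @commR K A N s T hr.
have lA := @lemA K A N s T hr. have lB := @lemB K A N s T hr.
have TT := @TinvT K A N s T hr.
have key : T j * ((\prod_(k <- index_iota i N) T k) *
                  (\prod_(k <- rev (index_iota i N)) T k)) =
           ((\prod_(k <- index_iota i N) T k) *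
                  (\prod_(k <- rev (index_iota i N)) T k)) * T j.
  have [lt|gt] : (j.+1 < i \/ i < j)%N by lia.
  - rewrite mulrA cL; try lia. rewrite -mulrA cR; try lia. by rewrite mulrA.
  - have hA := lA (j - i).-1 i j ltac:(lia) ltac:(lia) ltac:(lia).
    have hB := lB (j - i).-1 i j ltac:(lia) ltac:(lia) ltac:(lia).
    rewrite mulrA hA -mulrA hB. by rewrite mulrA.
rewrite /phi -scalerAr -scalerAl; congr (_ *: _).
rewrite -[LHS]mulrA -key [LHS]mulrA TT ?mul1r //; lia.
Qed.
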